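(* Let $\Gamma=(V,E)$ be a simple, acyclic, modular directed graph and let $F\subseteq E$ be a complete connected set of edges. Let $u,v\in V(F)$ be such that there is no directed path in $\Gamma(F)$ from $u$ to $v$. Then (1) there exists an edge $f\in F$ with $t(f)=v$, and (2) there exists an edge $e\in F$ with $h(e)=u$.
   Context: Each edge $e$ has tail $t(e)$ and head $h(e)$; simple means edges with the same tail and head coincide; acyclic means no directed path of positive length from a vertex to itself. A directed path is $e_1,\dots,e_k$ with $t(e_{i+1})=h(e_i)$; a vertex is joined to itself by the path of length $0$. $\Gamma$ is modular if for any two distinct edges $e_1,e_2$ with a common tail there exist edges $f_1,f_2$ with a common head and $h(e_i)=t(f_i)$, and for any two distinct edges $h_1,h_2$ with a common head there exist edges $g_1,g_2$ with a common tail and $h(g_i)=t(h_i)$. D-operation: from distinct edges $e_1,e_2$ with a common tail, any pair $f_1,f_2$ with a common head and $h(e_i)=t(f_i)$ is obtained; U-operation: from distinct edges $f_1',f_2'$ with a common head, any pair $e_1',e_2'$ with a common tail and $h(e_i')=t(f_i')$ is obtained. $F$ is complete if all results of D- and U-operations applied to edges of $F$ lie in $F$. $V(F)$ is the set of heads and tails of edges of $F$, and $\Gamma(F)$ is the subgraph with vertex set $V(F)$ and edge set $F$. $F$ is connected if the undirected graph underlying $\Gamma(F)$ is connected. *)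

(* Defs.v *)
From mathcomp Require Import all_boot.
From Stdlib Require Import Relation_Operators.
Set Implicit Arguments. Unset Strict Implicit. Unset Printing Implicit Defensive.

Section Graph.
Variables (V E : finType) (t h : E -> V).

Fixpoint dpath (x : V) (s : seq E) (y : V) : Prop :=
  match s with
  | [::] => x = y
  | e :: s' => t e = x /\ dpath (h e) s' y
  end.

Definition simple_graph : Prop :=
  forall e1 e2 : E, t e1 = t e2 -> h e1 = h e2 -> e1 = e2.

Definition acyclic : Prop :=
  forall (x : V) (s : seq E), dpath x s x -> s = [::].

Definition modular : Prop :=
  (forall e1 e2 : E, e1 <> e2 -> t e1 = t e2 ->
     exists f1 f2 : E, h f1 = h f2 /\ t f1 = h e1 /\ t f2 = h e2) /\
  (forall h1 h2 : E, h1 <> h2 -> h h1 = h h2 ->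
     exists g1 g2 : E, t g1 = t g2 /\ h g1 = t h1 /\ h g2 = t h2).

(* F is closed under D- and U-operations *)
Definition complete (F : {set E}) : Prop :=
  (forall e1 e2 f1 f2 : E, e1 \in F -> e2 \in F -> e1 <> e2 -> t e1 = t e2 ->
     h f1 = h f2 -> t f1 = h e1 -> t f2 = h e2 -> f1 \in F /\ f2 \in F) /\
  (forall f1 f2 e1 e2 : E, f1 \in F -> f2 \in F -> f1 <> f2 -> h f1 = h f2 ->
     t e1 = t e2 -> h e1 = t f1 -> h e2 = t f2 -> e1 \in F /\ e2 \in F).

Definition VF (F : {set E}) (x : V) : Prop :=
  exists2 e, e \in F & (t e = x \/ h e = x).

Definition uadj (F : {set E}) (x y : V) : Prop :=
  exists2 e, e \in F & ((t e = x /\ h e = y) \/ (t e = y /\ h e = x)).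

Definition connectedF (F : {set E}) : Prop :=
  forall x y : V, VF F x -> VF F y -> clos_refl_trans V (uadj F) x y.

Definition dpathF (F : {set E}) (x y : V) : Prop :=
  exists s : seq E, all (fun e => e \in F) s /\ dpath x s y.

End Graph.

(* Main.v *)
Require Import Defs.
From mathcomp Require Import all_boot.
From Stdlib Require Import Relation_Operators Operators_Properties Classical_Prop.
Set Implicit Arguments. Unset Strict Implicit.

Section Core.
Variables (V E : finType) (t h : E -> V) (F : {set E}) (v : V).
Hypothesis modD : forall e1 e2 : E, e1 <> e2 -> t e1 = t e2 ->
     exists f1 f2 : E, h f1 = h f2 /\ t f1 = h e1 /\ t f2 = h e2.
Hypothesis compD : forall e1 e2 f1 f2 : E, e1 \in F -> e2 \in F -> e1 <> e2 -> t e1 = t e2 ->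
     h f1 = h f2 -> t f1 = h e1 -> t f2 = h e2 -> f1 \in F /\ f2 \in F.
Hypothesis sink : forall f, f \in F -> t f <> v.

Lemma core (s : seq E) : forall x, all (fun e => e \in F) s -> dpath t h x s v ->
  forall e, e \in F -> t e = x -> dpathF t h F (h e) v.
Proof.
elim: s => [|e' s IH] x /= Hall Hp e He Hte.
  by case: (sink He (etrans Hte Hp)).
case/andP: Hall => He' Hall. case: Hp => Ht' Hp.
case: (eqVneq e e') => [->|Hne].
  by exists s.
have Hne' : e <> e' by apply/eqP.
have [f1 [f2 [H12 [Ht1 Ht2]]]] := modD Hne' (etrans Hte (esym Ht')).
have [Hf1 Hf2] := compD He He' Hne' (etrans Hte (esym Ht')) H12 Ht1 Ht2.
have [s2 [Hall2 Hp2]] := IH (h e') Hall Hp f2 Hf2 Ht2.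
exists (f1 :: s2); split; first by rewrite /= Hf1.
by split => //; rewrite H12.
Qed.

Lemma reach u : clos_refl_trans_1n V (uadj t h F) u v -> dpathF t h F u v.
Proof.
move=> H. pose w := v. change (clos_refl_trans_1n V (uadj t h F) u w) in H.
have : w = v by []. clearbody w.
elim: H => [x ->|x y z Hxy Hyz IH Ez]; first by exists [::].
subst z. have {}IH := IH erefl.
case: Hxy => e He [[Hx Hy]|[Hy Hx]].
  case: IH => s [Ha Hp]. exists (e :: s); split; first by rewrite /= He.
  by split => //; rewrite Hy.
case: IH => s [Ha Hp]. rewrite -Hx. exact: (core Ha Hp He Hy).
Qed.
End Core.

Lemma dpath_cat (V E : finType) (t h : E -> V) s1 s2 x y :
  (exists z, dpath t h x s1 z /\ dpath t h z s2 y) -> dpath t h x (s1 ++ s2) y.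
Proof.
elim: s1 x => [|e s IH] x [z [H1 H2]] /=; first by rewrite H1.
case: H1 => H1 H1'. split => //. apply: IH. by exists z.
Qed.

Lemma dpath_rev (V E : finType) (t h : E -> V) s x y :
  dpath t h x s y -> dpath h t y (rev s) x.
Proof.
elim: s x => [|e s IH] x /=; first by move=> ->.
case=> He Hp. rewrite rev_cons -cats1. apply: dpath_cat.
exists (h e); split; first exact: IH.
by split.
Qed.

Theorem lemma3p2p5 (V E : finType) (t h : E -> V) (F : {set E}) (u v : V) :
  simple_graph t h -> acyclic t h -> modular t h ->
  complete t h F -> connectedF t h F ->
  VF t h F u -> VF t h F v -> ~ dpathF t h F u v ->
  (exists2 f, f \in F & t f = v) /\ (exists2 e, e \in F & h e = u).
Proof.
move=> _ _ [mD mU] [cD cU] Hc Hu Hv Hnp; split.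
  apply: Classical_Prop.NNPP => Hno; apply: Hnp.
  apply: (reach mD cD).
    by move=> f Hf Htf; apply: Hno; exists f.
  apply: clos_rt_rt1n. exact: Hc.
apply: Classical_Prop.NNPP => Hno.
have Hrt : clos_refl_trans V (uadj t h F) v u by exact: Hc.
have Hrt' : clos_refl_trans_1n V (uadj h t F) v u.
  apply: clos_rt_rt1n.
  elim: Hrt => [x y Hxy|x|x y z _ IH1 _ IH2].
  - apply: rt_step. case: Hxy => e He [[A B]|[A B]]; exists e => //; [right|left]; by split.
  - exact: rt_refl.
  - exact: rt_trans IH1 IH2.
have [s [Ha Hp]] := reach (t := h) (h := t) (F := F) (v := u) (fun e1 e2 n e => mU e1 e2 n e)
  (fun a b c d A B C D G I J => cU a b c d A B C D G I J)
  (fun f Hf Htf => Hno (ex_intro2 _ _ f Hf Htf)) Hrt'.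
apply: Hnp. exists (rev s); split; last exact: (dpath_rev Hp).
by rewrite all_rev.
Qed.
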